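(* Let $q>1$ be an integer reducer capacity and consider $m$ inputs each of size one. Then every A2A mapping schema for these inputs has communication cost at least $m\left\lfloor\frac{m-1}{q-1}\right\rfloor$ and uses at least $\left\lfloor\frac{m}{q}\right\rfloor\left\lfloor\frac{m-1}{q-1}\right\rfloor$ reducers.
   Context: An A2A mapping schema for inputs with sizes $w_1,\dots,w_m$ and reducer capacity $q$ is an assignment of the inputs to a collection of reducers (each input may go to several reducers) such that every reducer receives inputs of total size at most $q$ and every pair of distinct inputs is assigned together to at least one reducer. The communication cost is the sum over reducers of the total size of the inputs assigned to it. *)

(* Defs.v *)
From mathcomp Require Import all_boot.
Set Implicit Arguments. Unset Strict Implicit. Unset Printing Implicit Defensive.

(* Inputs are indexed by 'I_m, with sizes w : 'I_m -> nat.
   A mapping schema is a finite list of reducers, each reducer being the set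
   of inputs assigned to it. *)

Definition load (m : nat) (w : 'I_m -> nat) (r : {set 'I_m}) : nat :=
  \sum_(i in r) w i.

Definition is_A2A_schema (m : nat) (w : 'I_m -> nat) (q : nat)
    (rs : seq {set 'I_m}) : Prop :=
  (forall r, r \in rs -> load w r <= q) /\
  (forall i j : 'I_m, i != j -> exists2 r, r \in rs & (i \in r) && (j \in r)).

Definition comm_cost (m : nat) (w : 'I_m -> nat) (rs : seq {set 'I_m}) : nat :=
  \sum_(r <- rs) load w r.

(* Main.v *)
Require Import Defs.
From mathcomp Require Import all_boot.

Lemma card_bigcup_seq (T : finType) (I : Type) (s : seq I) (P : pred I) (F : I -> {set T}) :
  #|\bigcup_(r <- s | P r) F r| <= \sum_(r <- s | P r) #|F r|.
Proof.
elim: s => [|x s IH]; first by rewrite !big_nil cards0.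
rewrite !big_cons; case: (P x) => //.
apply: leq_trans (leq_card_setU _ _) _; exact: leq_add.
Qed.

Lemma in_bigcup_seq (T : finType) (I : eqType) (s : seq I) (P : pred I) (F : I -> {set T}) x r :
  r \in s -> P r -> x \in F r -> x \in \bigcup_(r <- s | P r) F r.
Proof.
elim: s => [|y s IH] //; rewrite big_cons inE => /orP [/eqP <-|rin] Pr xF.
  by rewrite Pr in_setU xF.
by case: (P y); rewrite ?in_setU IH ?orbT.
Qed.

Theorem theorem6 (m q : nat) (rs : seq {set 'I_m}) :
  1 < q ->
  is_A2A_schema (fun _ : 'I_m => 1) q rs ->
  m * ((m - 1) %/ (q - 1)) <= comm_cost (fun _ : 'I_m => 1) rs /\
  (m %/ q) * ((m - 1) %/ (q - 1)) <= size rs.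
Proof.
move=> q1 [Hq Hp].
set k := (m - 1) %/ (q - 1).
have q0 : 0 < q - 1 by rewrite subn_gt0.
have Lr : forall r, load (fun _ : 'I_m => 1) r = #|r|.
  by move=> r; rewrite /load sum1_card.
have Cq : forall r, r \in rs -> #|r| <= q by move=> r /Hq; rewrite Lr.
have cost : comm_cost (fun _ : 'I_m => 1) rs = \sum_(i : 'I_m) count (fun r : {set 'I_m} => i \in r) rs.
  rewrite /comm_cost.
  under eq_bigr => r _ do rewrite Lr -sum1_card.
  rewrite (exchange_big_dep predT) //=.
  apply: eq_bigr => i _; rewrite -sum1_count.
  by rewrite big_mkcond /=.
have Di : forall i : 'I_m, k <= count (fun r : {set 'I_m} => i \in r) rs.
  move=> i.
  rewrite -(leq_pmul2r q0); apply: leq_trans (leq_trunc_div _ _) _.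
  have H1 : [set~ i] \subset \bigcup_(r <- rs | i \in r) (r :\ i).
    apply/subsetP => j; rewrite in_setC1 => ji.
    have [r rin /andP [ir jr]] := Hp i j ltac:(by rewrite eq_sym).
    apply: (@in_bigcup_seq _ _ rs (fun r => i \in r) (fun r => r :\ i) j r rin ir); by rewrite in_setD1 ji jr.
  have := subset_leq_card H1; rewrite cardsC1 card_ord => H2.
  rewrite subn1; apply: leq_trans H2 _.
  apply: leq_trans (card_bigcup_seq _ _ _ _ _) _.
  rewrite -sum1_count big_distrl /=.
  rewrite big_seq_cond [X in _ <= X]big_seq_cond.
  apply: leq_sum => r /andP [rin ir].
  rewrite mul1n subn1 -ltnS prednK; last exact: ltn_trans q1.
  by move: (Cq r rin); rewrite (cardsD1 i r) ir add1n.
have cost1 : m * k <= comm_cost (fun _ : 'I_m => 1) rs.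
  rewrite cost. apply: (@leq_trans (\sum_(i < m) k)); last by apply: leq_sum => i _; exact: Di.
  by rewrite sum_nat_const card_ord.
split => //.
have q0' : 0 < q by apply: ltn_trans q1.
rewrite -(leq_pmul2r q0').
apply: (@leq_trans (m * k)).
  by rewrite mulnAC leq_mul2r leq_trunc_div orbT.
apply: leq_trans cost1 _.
rewrite /comm_cost -sum1_size big_distrl /= big_seq [X in _ <= X]big_seq.
apply: leq_sum => r rin; rewrite mul1n Lr; exact: Cq.
Qed.
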